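(* Let $d\geq 1$, let $p=p_d=\frac{2d+1}{4d}$, let $(S_n)$ be the $d$-dimensional elephant random walk with memory parameter $p$, and let $G_n=\frac{1}{n}\sum_{k=1}^n S_k$. Then $$\lim_{n\to\infty}\frac{1}{\sqrt{n}\log n}G_n=0\quad\text{a.s.}$$
   Context: The $d$-dimensional elephant random walk (ERW) with memory parameter $p\in[0,1]$ is defined as follows. Let $e_1,\dots,e_d$ be the standard basis of $\mathbb{R}^d$; the $2d$ directions are $\pm e_1,\dots,\pm e_d$. Set $S_0=0$. The first step $X_1$ is uniformly distributed on the $2d$ directions. For $n\geq 1$, given $X_1,\dots,X_n$, an index $k$ is chosen uniformly at random in $\{1,\dots,n\}$, and then $X_{n+1}=X_k$ with probability $p$, while $X_{n+1}$ equals each of the $2d-1$ remaining directions with probability $(1-p)/(2d-1)$. The position is $S_{n+1}=S_n+X_{n+1}$. The case $p=p_d$ is the critical regime. *)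

(* Defs.v *)
From HB Require Import structures.
From mathcomp Require Import all_boot all_order all_algebra.
From mathcomp Require Import all_classical all_reals all_analysis.
Set Implicit Arguments. Unset Strict Implicit. Unset Printing Implicit Defensive.
Import Order.TTheory GRing.Theory Num.Theory.
Import numFieldNormedType.Exports.
Local Open Scope classical_set_scope.
Local Open Scope ring_scope.

(* The 2d directions +-e_i : a pair (i, s) stands for e_i if s = true,
   and for -e_i if s = false. *)
Definition dir (d : nat) := ('I_d * bool)%type.

Definition dir_coord {R : realType} {d : nat} (x : dir d) (j : 'I_d) : R :=
  if x.1 == j then (if x.2 then 1 else -1) else 0.

Definition p_crit {R : realType} (d : nat) : R := (2 * d + 1)%:R / (4 * d)%:R.

(* Transition probability of the ERW: given the first n steps x 0, ..., x (n-1)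
   (n >= 1), the probability that step n+1 equals y: a uniform index k among
   the n past steps is drawn, then y = x k w.p. p, and each of the 2d-1 other
   directions w.p. (1-p)/(2d-1). *)
Definition erw_trans {R : realType} (d : nat) (p : R) (n : nat)
  (x : nat -> dir d) (y : dir d) : R :=
  n%:R^-1 * \sum_(k < n) (if x k == y then p else (1 - p) / (2 * d - 1)%:R).

(* Cylinder event {X_0 = x 0, ..., X_(n-1) = x (n-1)}  (0-indexed steps:
   X k is the (k+1)-th step of the walk) *)
Definition cyl {T : Type} {d : nat} (X : nat -> T -> dir d) (n : nat)
  (x : nat -> dir d) : set T :=
  [set t | forall k, (k < n)%N -> X k t = x k].

(* X is (the step sequence of) a d-dimensional elephant random walk with
   memory parameter p under P: its finite-dimensional distributions are those
   of the ERW. *)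
Definition is_ERW {dT : measure_display} {T : measurableType dT} {R : realType}
  (P : probability T R) (d : nat) (p : R) (X : nat -> T -> dir d) : Prop :=
  (forall n y, measurable [set t | X n t = y]) /\
  (forall y, P [set t | X 0%N t = y] = ((2 * d)%:R^-1)%:E) /\
  (forall n x y, (0 < n)%N ->
     P (cyl X n.+1 (fun k => if k == n then y else x k))
     = ((erw_trans p n x y)%:E * P (cyl X n x))%E).

Definition erw_S {T : Type} {R : realType} {d : nat} (X : nat -> T -> dir d)
  (n : nat) (t : T) (j : 'I_d) : R :=
  \sum_(k < n) dir_coord (X k t) j.

Definition erw_G {T : Type} {R : realType} {d : nat} (X : nat -> T -> dir d)
  (n : nat) (t : T) (j : 'I_d) : R :=
  n%:R^-1 * \sum_(1 <= k < n.+1) erw_S X k t j.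

(* Main.v *)
Require Import Defs.
From HB Require Import structures.
From mathcomp Require Import all_boot all_order all_algebra.
From mathcomp Require Import all_classical all_reals all_analysis.
From mathcomp Require Import ring lra.
Import Order.TTheory GRing.Theory Num.Theory.
Import numFieldNormedType.Exports.
Local Open Scope classical_set_scope.
Local Open Scope ring_scope.

Section Alg.
Variables (R : realType) (d : nat) (x0 : dir d) (j : 'I_d).
Hypothesis hd : (0 < d)%N.
Local Notation D := ('I_d * bool)%type.

Definition tr n (s : seq D) (y : D) : R := erw_trans (p_crit (R:=R) d) n (nth x0 s) y.
Definition cc (y : D) : R := dir_coord y j.
Definition Sx (s : seq D) : R := \sum_(y <- s) cc y.
Definition V (s : seq D) : R := Sx s ^+ 2 / (size s)%:R.

Lemma card_D : #|{: D}| = (2 * d)%N.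
Proof. by rewrite card_prod card_ord card_bool mulnC. Qed.

Lemma sum_c : \sum_(y : D) cc y = 0.
Proof.
rewrite (eq_bigr (fun p : D => cc (p.1, p.2))); last by case.
rewrite -(pair_bigA _ (fun i b => cc (i, b))) /= big1 // => i _; rewrite big_bool /cc /dir_coord /=.
by case: eqP => _; rewrite ?addr0 ?subrr.
Qed.

Lemma cc2 y : cc y ^+ 2 <= 1.
Proof. by rewrite /cc /dir_coord; case: eqP => _; case: (y.2); rewrite ?sqrrN ?expr1n ?expr0n. Qed.

Lemma cc2_ge0 y : 0 <= cc y ^+ 2.
Proof. exact: sqr_ge0. Qed.

Lemma sum_ite (a : D) (u v : R) (F : D -> R) :
  \sum_(y : D) (if a == y then u else v) * F y = v * \sum_(y : D) F y + (u - v) * F a.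
Proof.
rewrite (bigD1 a) //= eqxx [in RHS](bigD1 a) //= mulrDr.
rewrite (eq_bigr (fun y => v * F y)); last first.
  by move=> y; rewrite eq_sym => /negbTE ->.
rewrite -mulr_sumr; ring.
Qed.

Lemma sum_ite1 (a : D) (u v : R) :
  \sum_(y : D) (if a == y then u else v) = v * (2 * d)%:R + (u - v).
Proof.
have := sum_ite a u v (fun _ => 1).
rewrite (eq_bigr (fun y => if a == y then u else v)); last by move=> y _; rewrite mulr1.
move=> ->; rewrite sumr_const card_D mulr1; done.
Qed.

Definition pc : R := p_crit (R:=R) d.
Definition qc : R := (1 - pc) / (2 * d - 1)%:R.

Lemma natd2 : (2 * d - 1)%:R = 2 * d%:R - 1 :> R.
Proof. by rewrite natrB ?muln_gt0 // natrM. Qed.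

Lemma dpos : 0 < d%:R :> R.
Proof. by rewrite ltr0n. Qed.

Lemma pc_val : pc = (2 * d%:R + 1) / (4 * d%:R).
Proof. by rewrite /pc /p_crit natrD !natrM. Qed.

Lemma qc_val : qc = (4 * d%:R)^-1.
Proof.
rewrite /qc pc_val natd2.
have h1 : 2 * d%:R - 1 != 0 :> R.
  have h0 : 1 <= d%:R :> R by rewrite ler1n.
  apply: lt0r_neq0; lra.
have h2 : d%:R != 0 :> R by rewrite lt0r_neq0 ?dpos.
by field; rewrite h1 h2.
Qed.

Lemma pq_sum : qc * (2 * d)%:R + (pc - qc) = 1.
Proof.
rewrite qc_val pc_val natrM.
have h2 : d%:R != 0 :> R by rewrite lt0r_neq0 ?dpos.
by field; rewrite h2.
Qed.

Lemma pq_diff : pc - qc = 2^-1.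
Proof.
rewrite qc_val pc_val.
have h2 : d%:R != 0 :> R by rewrite lt0r_neq0 ?dpos.
by field; rewrite h2.
Qed.

Lemma pc_ge0 : 0 <= pc.
Proof. by rewrite pc_val; apply: divr_ge0; have := dpos; lra. Qed.
Lemma qc_ge0 : 0 <= qc.
Proof. by rewrite qc_val; apply: ltW; rewrite invr_gt0; have := dpos; lra. Qed.

Lemma trE n s y : tr n s y = n%:R^-1 * \sum_(k < n) (if nth x0 s k == y then pc else qc).
Proof. by []. Qed.

Lemma tr_ge0 n s y : 0 <= tr n s y.
Proof.
rewrite trE mulr_ge0 ?invr_ge0 ?ler0n // sumr_ge0 // => k _.
by case: ifP => _; [exact: pc_ge0 | exact: qc_ge0].
Qed.

Lemma sum_tr n s : (0 < n)%N -> \sum_(y : D) tr n s y = 1.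
Proof.
move=> n0; under eq_bigr do rewrite trE.
rewrite -mulr_sumr exchange_big /=.
under eq_bigr do rewrite sum_ite1 pq_sum.
by rewrite sumr_const card_ord mulVf // pnatr_eq0 -lt0n.
Qed.

Lemma Sx_nth s : Sx s = \sum_(k < size s) cc (nth x0 s k).
Proof. by rewrite /Sx (big_nth x0) big_mkord. Qed.

Lemma Sx_rcons s y : Sx (rcons s y) = Sx s + cc y.
Proof. by rewrite /Sx -cats1 big_cat big_seq1. Qed.

Lemma sum_trc n s : (0 < n)%N -> size s = n ->
  \sum_(y : D) tr n s y * cc y = (2 * n%:R)^-1 * Sx s.
Proof.
move=> n0 sz; under eq_bigr do rewrite trE -mulrA mulr_suml.
rewrite -mulr_sumr exchange_big /=.
under eq_bigr do rewrite sum_ite sum_c pq_diff mulr0 add0r.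
rewrite -mulr_sumr Sx_nth sz invfM mulrA [n%:R^-1 * _]mulrC; done.
Qed.

Lemma sum_trc2 n s : (0 < n)%N ->
  0 <= \sum_(y : D) tr n s y * cc y ^+ 2 <= 1.
Proof.
move=> n0; apply/andP; split.
  by apply: sumr_ge0 => y _; rewrite mulr_ge0 ?tr_ge0 ?cc2_ge0.
rewrite -(sum_tr n s n0); apply: ler_sum => y _.
by rewrite -[X in _ <= X]mulr1 ler_wpM2l ?tr_ge0 ?cc2.
Qed.

Lemma sum_mull (a : R) (F : D -> R) : \sum_(y : D) a * F y = a * \sum_(y : D) F y.
Proof. by rewrite mulr_sumr. Qed.

Lemma condV n s : (0 < n)%N -> size s = n ->
  \sum_(y : D) tr n s y * V (rcons s y)
  = V s + (\sum_(y : D) tr n s y * cc y ^+ 2) / n.+1%:R.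
Proof.
move=> n0 sz.
have E : forall y, tr n s y * V (rcons s y) =
   (Sx s ^+ 2 / n.+1%:R) * tr n s y + (2 * Sx s / n.+1%:R) * (tr n s y * cc y)
   + n.+1%:R^-1 * (tr n s y * cc y ^+ 2).
  by move=> y; rewrite /V Sx_rcons size_rcons sz; ring.
under eq_bigr do rewrite E.
rewrite !big_split /= (sum_mull _ (tr n s)) (sum_mull _ (fun y => tr n s y * cc y)) (sum_mull _ (fun y => tr n s y * cc y ^+ 2)).
rewrite sum_tr // sum_trc // /V sz.
have h : n%:R != 0 :> R by rewrite pnatr_eq0 -lt0n.
have h' : n.+1%:R != 0 :> R by rewrite pnatr_eq0.
by rewrite -natr1 in h' *; field; rewrite h h'.
Qed.

Fixpoint paths (n : nat) : seq (seq D) :=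
  if n is n'.+1 then [seq rcons s y | s <- paths n', y <- enum {: D}] else [:: [::]].

Lemma mem_paths n s : (s \in paths n) = (size s == n).
Proof.
elim: n s => [|n IH] s /=.
  by rewrite inE; case: s.
apply/allpairsP/idP => [[[s' y] /= [h1 _ ->]]|].
  by rewrite size_rcons eqSS -IH.
case/lastP: s => [//|s' y]; rewrite size_rcons eqSS -IH => h.
by exists (s', y); rewrite /= mem_enum.
Qed.

Lemma uniq_paths n : uniq (paths n).
Proof.
elim: n => [//|n IH] /=.
apply: allpairs_uniq => //; first exact: enum_uniq.
by move=> [a b] [a' b'] _ _ /= /rcons_inj.
Qed.

Variable w : nat -> seq D -> R.
Hypothesis w_ge0 : forall n s, 0 <= w n s.
Hypothesis w1 : forall y, w 1 [:: y] = (2 * d)%:R^-1.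
Hypothesis wS : forall n s y, (0 < n)%N -> size s = n ->
  w n.+1 (rcons s y) = tr n s y * w n s.
Hypothesis wsum : forall n, \sum_(s <- paths n) w n s = 1.

Definition Ex n (F : seq D -> R) := \sum_(s <- paths n) F s * w n s.

Lemma Ex_step n F : (0 < n)%N ->
  Ex n.+1 F = \sum_(s <- paths n) w n s * \sum_(y : D) tr n s y * F (rcons s y).
Proof.
move=> n0; rewrite /Ex /= big_allpairs_dep /= big_seq [RHS]big_seq.
apply: eq_bigr => s; rewrite mem_paths => /eqP sz.
rewrite big_enum /= mulr_sumr; apply: eq_bigr => y _.
by rewrite wS //; ring.
Qed.

Lemma Ex1 F : Ex 1 F = \sum_(y : D) (2 * d)%:R^-1 * F [:: y].
Proof.
rewrite /Ex /= cats0 big_map big_enum /=.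
by apply: eq_bigr => y _; rewrite w1 mulrC.
Qed.

Lemma Ex_mono n f g : (0 < n)%N ->
  (forall s, size s = n -> f s <= \sum_(y : D) tr n s y * g (rcons s y)) ->
  Ex n f <= Ex n.+1 g.
Proof.
move=> n0 h; rewrite Ex_step // /Ex big_seq [X in _ <= X]big_seq.
apply: ler_sum => s; rewrite mem_paths => /eqP sz.
by rewrite mulrC ler_wpM2l // h.
Qed.

Lemma Ex_mono' n f g : (0 < n)%N ->
  (forall s, size s = n -> \sum_(y : D) tr n s y * g (rcons s y) <= f s) ->
  Ex n.+1 g <= Ex n f.
Proof.
move=> n0 h; rewrite Ex_step // /Ex big_seq [X in _ <= X]big_seq.
apply: ler_sum => s; rewrite mem_paths => /eqP sz.
by rewrite [X in _ <= X]mulrC ler_wpM2l // h.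
Qed.

Lemma Ex_le n f g : (forall s, f s <= g s) -> Ex n f <= Ex n g.
Proof. by move=> h; apply: ler_sum => s _; rewrite ler_wpM2r. Qed.

Lemma ExD n f g : Ex n (fun s => f s + g s) = Ex n f + Ex n g.
Proof. by rewrite /Ex -big_split; apply: eq_bigr => s _; rewrite mulrDl. Qed.

Lemma Ex_const n c : Ex n (fun _ => c) = c.
Proof. by rewrite /Ex -mulr_sumr wsum mulr1. Qed.

Lemma V_ge0 s : 0 <= V s.
Proof. by rewrite /V divr_ge0 ?sqr_ge0. Qed.

Fixpoint vmaxn (s : seq D) (n : nat) : R :=
  if n is k.+1 then Num.max (vmaxn s k) (V (take k.+1 s)) else 0.
Definition vmax (s : seq D) : R := vmaxn s (size s).

Lemma vmaxn_ge0 s n : 0 <= vmaxn s n.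
Proof. by elim: n => [//|n IH] /=; rewrite le_max IH. Qed.

Lemma vmax_ge0 s : 0 <= vmax s.
Proof. exact: vmaxn_ge0. Qed.

Lemma vmaxn_rcons s y k : (k <= size s)%N -> vmaxn (rcons s y) k = vmaxn s k.
Proof.
elim: k => [//|k IH] hk /=; rewrite IH ?(ltnW hk) //.
by rewrite -cats1 takel_cat.
Qed.

Lemma vmax_rcons s y : vmax (rcons s y) = Num.max (vmax s) (V (rcons s y)).
Proof.
by rewrite /vmax size_rcons /= vmaxn_rcons // take_oversize // size_rcons.
Qed.

Lemma vmax_nil : vmax [::] = 0.
Proof. by []. Qed.

Lemma vmaxn_mono s k m : (k <= m)%N -> vmaxn s k <= vmaxn s m.
Proof.
elim: m => [|m IH]; first by rewrite leqn0 => /eqP ->.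
rewrite leq_eqVlt => /orP [/eqP -> //|]; rewrite ltnS => /IH h /=.
by rewrite le_max h.
Qed.

Lemma V_le_vmax s k : (0 < k <= size s)%N -> V (take k s) <= vmax s.
Proof.
case: k => [//|k] /andP [_ hk].
rewrite /vmax; apply: le_trans _ (@vmaxn_mono s _ _ hk) => /=.
by rewrite le_max lexx orbT.
Qed.

Section Doob.
Variable lam : R.
Hypothesis lam0 : 0 < lam.

Definition hD (s : seq D) : R := (if lam < vmax s then 1 else 0) * (V s - lam).

Lemma Ex_hD n : (0 < n)%N -> 0 <= Ex n hD.
Proof.
elim: n => [//|n IH] _.
case: (posnP n) => [->|n0].
  rewrite Ex1 sumr_ge0 // => y _; rewrite mulr_ge0 ?invr_ge0 ?ler0n //.
  rewrite /hD -[[:: y]]/(rcons [::] y) vmax_rcons vmax_nil.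
  rewrite (@max_idPr _ _ 0 _ (V_ge0 _)).
  by case: ltP => h; rewrite ?mul0r // mul1r subr_ge0 ltW.
apply: le_trans (IH n0) _; apply: Ex_mono => // s sz.
rewrite /hD; case: (ltP lam (vmax s)) => h.
  rewrite mul1r.
  under eq_bigr => y _.
    rewrite vmax_rcons (_ : lam < Num.max _ _ = true); last first.
      by rewrite lt_max h.
    rewrite mul1r mulrBr.
  over.
  rewrite big_split /= condV // sumrN -mulr_suml sum_tr // mul1r.
  rewrite lerD2r lerDl divr_ge0 //; by case/andP: (sum_trc2 n s n0).
rewrite mul0r sumr_ge0 // => y _; rewrite mulr_ge0 ?tr_ge0 //.
rewrite vmax_rcons lt_max [lam < vmax s]ltNge h /=.
by case: ltP => h2; rewrite ?mul0r // mul1r subr_ge0 ltW.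
Qed.

Lemma doob n : (0 < n)%N -> lam * Ex n (fun s => (if lam < vmax s then 1 else 0)) <= Ex n V.
Proof.
move=> n0; have := Ex_hD n n0; rewrite /hD.
have -> : Ex n (fun s => (if lam < vmax s then 1 else 0) * (V s - lam)) =
   Ex n (fun s => (if lam < vmax s then 1 else 0) * V s) - lam * Ex n (fun s => (if lam < vmax s then 1 else 0)).
  rewrite /Ex mulr_sumr -sumrB; apply: eq_bigr => s _; ring.
rewrite subr_ge0 => h; apply: le_trans h _; apply: Ex_le => s.
by case: ltP => _; rewrite ?mul1r ?mul0r ?V_ge0.
Qed.
End Doob.

Definition H (n : nat) : R := \sum_(1 <= k < n.+1) k%:R^-1.

Lemma ExV n : (0 < n)%N -> Ex n V <= H n.
Proof.
elim: n => [//|n IH] _.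
case: (posnP n) => [->|n0].
  rewrite Ex1 /H big_nat1 invr1.
  apply: le_trans (_ : \sum_(y : D) (2 * d)%:R^-1 <= 1).
    apply: ler_sum => y _; rewrite -[X in _ <= X]mulr1 ler_wpM2l ?invr_ge0 ?ler0n //.
    by rewrite /V /= invr1 mulr1 /Sx big_seq1 cc2.
  by rewrite sumr_const card_D -(mulr_natr ((2 * d)%:R^-1)) mulVf // pnatr_eq0 -lt0n muln_gt0 hd.
apply: (le_trans (@Ex_mono' n (fun s => V s + n.+1%:R^-1) V n0 _)).
  move=> s sz; rewrite condV // lerD2l -[X in _ <= X]mul1r ler_wpM2r ?invr_ge0 ?ler0n //.
  by case/andP: (sum_trc2 n s n0).
rewrite ExD Ex_const /H big_nat_recr //= lerD2r; exact: IH.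
Qed.

Lemma H_pow q : H (2 ^ q) <= q.+1%:R.
Proof.
elim: q => [|q IH]; first by rewrite /H expn0 big_nat1 invr1.
rewrite /H (big_cat_nat (n := (2 ^ q).+1)) //=; last first.
  by rewrite ltnS leq_exp2l.
rewrite -natr1 lerD //.
apply: le_trans (_ : \sum_((2 ^ q).+1 <= i < (2 ^ q.+1).+1) (2 ^ q)%:R^-1 <= 1).
  apply: ler_sum_nat => k /andP [hk _]; rewrite lef_pV2 ?posrE ?ltr0n ?expn_gt0 //.
    by rewrite ler_nat ltnW.
  by apply: leq_ltn_trans hk.
by rewrite sumr_const_nat subSS expnS mul2n -addnn addnK -(mulr_natr ((2 ^ q)%:R^-1)) mulVf // pnatr_eq0 expn_eq0.
Qed.

End Alg.

Section Meas.
Variables (dT : measure_display) (T : measurableType dT) (R : realType)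
  (P : probability T R) (d : nat) (X : nat -> T -> dir d).
Local Notation D := ('I_d * bool)%type.
Hypothesis hX : forall n y, measurable [set t | X n t = y].

Definition pth n t : seq D := mkseq (fun k => (X k t : D)) n.

Lemma size_pth n t : size (pth n t) = n.
Proof. by rewrite size_mkseq. Qed.

Lemma pthS n t : pth n.+1 t = rcons (pth n t) (X n t).
Proof. by rewrite /pth /mkseq -addn1 iotaD map_cat cats1. Qed.

Lemma rcons_eqP (s s' : seq D) (y y' : D) :
  (rcons s y = rcons s' y') <-> (s = s' /\ y = y').
Proof.
split; first by move/rcons_inj => [-> ->].
by case=> -> ->.
Qed.

Lemma meas_eq n s : measurable [set t | pth n t = s].
Proof.
elim: n s => [|n IH] s.
  case: s => [|a s].
    by rewrite [X in measurable X](_ : _ = setT) //; apply/seteqP; split.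
  by rewrite [X in measurable X](_ : _ = set0) //; apply/seteqP; split.
case/lastP: s => [|s y].
  rewrite [X in measurable X](_ : _ = set0) //; apply/seteqP; split => t /=; last by [].
  by rewrite pthS; case: (pth n t).
rewrite [X in measurable X](_ : _ = [set t | pth n t = s] `&` [set t | X n t = y]).
  exact: measurableI.
by apply/seteqP; split => t /=; rewrite pthS rcons_eqP.
Qed.

Lemma meas_in n (L : seq (seq D)) : measurable [set t | pth n t \in L].
Proof.
elim: L => [|a L IH].
  by rewrite [X in measurable X](_ : _ = set0) //; apply/seteqP; split.
rewrite [X in measurable X](_ : _ = [set t | pth n t = a] `|` [set t | pth n t \in L]).
  exact: measurableU (meas_eq n a) IH.
apply/seteqP; split => t /=; rewrite inE.
  by case/orP => [/eqP ->|h]; [left|right].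
by case=> [->|h]; rewrite ?eqxx ?h ?orbT.
Qed.

Lemma P_in n (L : seq (seq D)) : uniq L ->
  P [set t | pth n t \in L] = (\sum_(s <- L) P [set t | pth n t = s])%E.
Proof.
elim: L => [|a L IH] /=.
  by move=> _; rewrite big_nil -(measure0 P); congr (P _); apply/seteqP; split.
case/andP => naL uL; rewrite big_cons -IH //.
rewrite -measureU; [|exact: meas_eq|exact: meas_in|].
  congr (P _); apply/seteqP; split => t /=; rewrite inE.
    by case/orP => [/eqP ->|h]; [left|right].
  by case=> [->|->]; rewrite ?eqxx ?orbT.
apply/seteqP; split => t //= [-> h]; by rewrite h in naL.
Qed.

Definition wr n s : R := fine (P [set t | pth n t = s]).

Lemma P_fin A : measurable A -> P A = (fine (P A))%:E.
Proof. by move=> mA; rewrite fineK // fin_num_measure. Qed.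

Lemma Peq n s : P [set t | pth n t = s] = (wr n s)%:E.
Proof. exact: (@P_fin _ (meas_eq n s)). Qed.

Lemma wr_ge0 n s : 0 <= wr n s.
Proof. by rewrite /wr fine_ge0 // measure_ge0. Qed.

Lemma P_pred n (f : pred (seq D)) :
  P [set t | f (pth n t)] = (\sum_(s <- paths d n | f s) wr n s)%:E.
Proof.
rewrite [X in P X](_ : _ = [set t | pth n t \in seq.filter f (paths d n)]); last first.
  by apply/seteqP; split => t /=; rewrite mem_filter mem_paths size_pth eqxx andbT.
rewrite P_in ?filter_uniq ?uniq_paths // big_filter -sumEFin.
by apply: eq_bigr => s _; rewrite Peq.
Qed.

Lemma meas_pred n (f : pred (seq D)) : measurable [set t | f (pth n t)].
Proof.
rewrite [X in measurable X](_ : _ = [set t | pth n t \in seq.filter f (paths d n)]).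
  exact: meas_in.
by apply/seteqP; split => t /=; rewrite mem_filter mem_paths size_pth eqxx andbT.
Qed.

Lemma wsum n : \sum_(s <- paths d n) wr n s = 1.
Proof.
have := P_pred n xpredT.
rewrite [X in P X](_ : _ = setT); last by apply/seteqP; split.
by rewrite probability_setT => /esym [].
Qed.

Variable x0 : dir d.

Lemma cyl_pth n s : size s = n -> cyl X n (nth x0 s) = [set t | pth n t = s].
Proof.
move=> sz; apply/seteqP; split => t /=.
  move=> h; apply: (@eq_from_nth _ x0); rewrite ?size_pth ?sz // => k hk.
  by rewrite nth_mkseq // h.
by move=> <- k hk; rewrite nth_mkseq.
Qed.

Lemma nth_rcons_upd s y n k : size s = n -> (k < n.+1)%N ->
  nth x0 (rcons s y) k = if k == n then y else nth x0 s k.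
Proof.
move=> sz hk; rewrite nth_rcons sz.
case: ltngtP => // h; by rewrite ltnS leqNgt h in hk.
Qed.

Hypothesis hE : is_ERW P (p_crit (R:=R) d) X.

Lemma wr1 y : wr 1 [:: y] = (2 * d)%:R^-1.
Proof.
case: hE => _ [h2 _]; rewrite /wr.
rewrite [X in P X](_ : _ = [set t | X 0%N t = y]); first by rewrite h2.
by apply/seteqP; split => t; rewrite /= /pth /mkseq /=; [case | move=> ->].
Qed.

Lemma wrS n s y : (0 < n)%N -> size s = n ->
  wr n.+1 (rcons s y) = @tr R d x0 n s y * wr n s.
Proof.
move=> n0 sz; case: hE => _ [_ h3].
have := h3 n (nth x0 s) y n0.
rewrite cyl_pth // Peq.
rewrite (_ : cyl X n.+1 _ = cyl X n.+1 (nth x0 (rcons s y))); last first.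
  by apply/seteqP; split => t /= h k hk; rewrite h // (nth_rcons_upd s y n k sz hk).
rewrite cyl_pth ?size_rcons ?sz // Peq -EFinM => -[].
by rewrite /tr.
Qed.

End Meas.

Lemma geo_fin (R : realType) : (\sum_(m <oo) (((2 ^ m.+1)%:R : R)^-1)%:E < +oo)%E.
Proof.
have h := @cvg_geometric_eseries_half R 1 0.
have E : eseries (fun k => ((1 : R) / (2 ^ (k + 0.+1))%:R)%:E) =
    (fun n => \sum_(0 <= m < n) (((2 ^ m.+1)%:R : R)^-1)%:E)%E.
  apply: funext => n; rewrite /eseries /=; apply: eq_bigr => k _.
  by rewrite div1r addn1.
rewrite E in h; rewrite (cvg_lim _ h) //.
by rewrite ltry.
Qed.

Definition Nm m := (2 ^ (4 ^ m))%N.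

Lemma Nm_lt m : (Nm m < Nm m.+1)%N.
Proof. by rewrite /Nm ltn_exp2l // ltn_exp2l. Qed.

Lemma Nm_ge2 m : (2 <= Nm m)%N.
Proof. by rewrite /Nm -{1}(expn1 2) leq_exp2l // expn_gt0. Qed.

Lemma cover m0 n : (Nm m0 <= n)%N -> exists m, (m0 <= m)%N /\ (Nm m <= n < Nm m.+1)%N.
Proof.
elim: n => [|n IH].
  by move=> h; have := Nm_ge2 m0; rewrite leqn0 in h; rewrite (eqP h).
rewrite leq_eqVlt => /orP [/eqP <-|].
  by exists m0; split => //; rewrite leqnn Nm_lt.
rewrite ltnS => /IH [m [hm /andP [h1 h2]]].
case: (ltngtP n.+1 (Nm m.+1)) => h3.
- by exists m; split => //; rewrite h3 andbT (leq_trans h1).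
- by rewrite ltnNge h2 in h3.
- by exists m.+1; split; [exact: (leq_trans hm) | rewrite h3 leqnn Nm_lt].
Qed.

Lemma ln2_ge (R : realType) : 2^-1 <= ln (2 : R).
Proof.
have h := expR_ge1Dx (- ln (2 : R)).
rewrite expRN lnK ?posrE // in h.
lra.
Qed.

Section Final.
Variables (dT : measure_display) (T : measurableType dT) (R : realType)
  (P : probability T R) (d : nat) (X : nat -> T -> dir d).
Local Notation D := ('I_d * bool)%type.
Hypothesis hd : (0 < d)%N.
Hypothesis hE : is_ERW P (p_crit (R:=R) d) X.
Variables (x0 : dir d) (j : 'I_d).

Let hX : forall n y, measurable [set t | X n t = y] := proj1 hE.
Let W := wr dT T R P d X.

Definition lamm m : R := (2 ^ m.+1 * (4 ^ m.+1).+1)%:R.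
Definition Fm m := [set t | lamm m < vmax R d j (pth dT T d X (Nm m.+1) t)].

Lemma Fm_meas m : measurable (Fm m).
Proof. exact: (@meas_pred _ _ _ X hX (Nm m.+1) (fun s => lamm m < vmax R d j s)). Qed.

Lemma PF m : (P (Fm m) <= (((2 ^ m.+1)%:R : R)^-1)%:E)%E.
Proof.
rewrite /Fm (@P_pred _ _ _ P _ X hX (Nm m.+1) (fun s => lamm m < vmax R d j s)) lee_fin.
set N := Nm m.+1.
have -> : \sum_(s <- paths d N | lamm m < vmax R d j s) wr dT T R P d X N s =
    Ex R d W N (fun s => if lamm m < vmax R d j s then 1 else 0).
  rewrite /Ex big_mkcond /=; apply: eq_bigr => s _.
  by case: ifP; rewrite ?mul1r ?mul0r.
set x := Ex R d W N _.
have hl : 0 < lamm m by rewrite /lamm ltr0n muln_gt0 expn_gt0.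
have h1 : lamm m * x <= (4 ^ m.+1).+1%:R.
  apply: le_trans (@doob R d x0 j hd W (@wr_ge0 _ _ _ P d X) (@wr1 _ _ _ P d X hE)
    (@wrS _ _ _ P d X hX x0 hE) (lamm m) N _) _.
    exact: leq_trans (Nm_ge2 _).
  apply: le_trans (@ExV R d x0 j hd W (@wr_ge0 _ _ _ P d X) (@wr1 _ _ _ P d X hE)
    (@wrS _ _ _ P d X hX x0 hE) (@wsum _ _ _ P d X hX) N _) _.
    exact: leq_trans (Nm_ge2 _).
  exact: (H_pow R (4 ^ m.+1)).
move: h1; rewrite /lamm natrM.
have ha : 0 < (2 ^ m.+1)%:R :> R by rewrite ltr0n expn_gt0.
have hK : 0 < (4 ^ m.+1).+1%:R :> R by rewrite ltr0n.
set a := (2 ^ m.+1)%:R; set K := (4 ^ m.+1).+1%:R => h1.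
have h2 : a * x <= 1.
  rewrite -(ler_pM2r hK) mul1r; apply: le_trans h1; rewrite le_eqVlt; apply/orP; left.
  by apply/eqP; ring.
rewrite -(ler_pM2l ha) mulfV ?gt_eqF //.
Qed.

Lemma sum_PF : (\sum_(m <oo) P (Fm m) < +oo)%E.
Proof.
apply: le_lt_trans (geo_fin R).
apply: lee_nneseries => [i _ _|n _]; first exact: measure_ge0.
exact: PF.
Qed.

Lemma pth_take N k t : (k <= N)%N -> take k (pth dT T d X N t) = pth dT T d X k t.
Proof.
move=> hk; apply: (@eq_from_nth _ x0); rewrite ?size_takel ?size_pth //.
by move=> i hi; rewrite nth_take // !nth_mkseq // (leq_trans hi).
Qed.

Lemma ES k t : erw_S X k t j = Sx R d j (pth dT T d X k t).
Proof.
have e : iota 0 k = index_iota 0 k by rewrite /index_iota subn0.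
by rewrite /erw_S /Sx /pth /mkseq big_map e big_mkord.
Qed.

Lemma DB t N n L : (0 < n <= N)%N -> vmax R d j (pth dT T d X N t) <= L ->
  `|erw_G X n t j| <= Num.sqrt (n%:R * L).
Proof.
move=> /andP [n0 nN] hL.
have L0 : 0 <= L := le_trans (vmax_ge0 _ _ _ _) hL.
have hS : forall k, (0 < k <= n)%N -> `|erw_S X k t j| <= Num.sqrt (n%:R * L).
  move=> k /andP [k0 kn]; rewrite ES -sqrtr_sqr ler_sqrt ?mulr_ge0 ?ler0n //.
  have hk : (0 < k <= size (pth dT T d X N t))%N by rewrite k0 size_pth (leq_trans kn).
  have := le_trans (@V_le_vmax R d j _ _ hk) hL.
  rewrite pth_take ?(leq_trans kn) // /V size_pth.
  have kp : 0 < k%:R :> R by rewrite ltr0n.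
  rewrite ler_pdivrMr // => h; apply: le_trans h _.
  by rewrite [L * _]mulrC ler_wpM2r // ler_nat.
rewrite /erw_G normrM ger0_norm ?invr_ge0 ?ler0n //.
have np : 0 < n%:R :> R by rewrite ltr0n.
rewrite mulrC ler_pdivrMr //.
apply: le_trans (ler_norm_sum _ _ _) _.
apply: le_trans (_ : \sum_(1 <= k < n.+1) Num.sqrt (n%:R * L) <= _).
  apply: ler_sum_nat => k /andP [k1 kn]; apply: hS; rewrite k1 -ltnS //.
by rewrite sumr_const_nat subSS subn0 mulr_natr.
Qed.

End Final.

Lemma NL (R : realType) m (e : R) : 0 < e -> 40 <= e ^+ 2 * (2 ^ m)%:R ->
  Num.sqrt (lamm R m) <= e * ln (Nm m)%:R.
Proof.
move=> e0 he.
rewrite /Nm natrX lnXn // -(mulr_natr (ln (2%:R : R))).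
have l2 := ln2_ge R.
set l := ln 2 in l2 *.
have eb : (4 ^ m)%:R = (2 ^ m)%:R * (2 ^ m)%:R :> R by rewrite -natrM -expnMn.
set a := (2 ^ m)%:R in he eb *; set b := (4 ^ m)%:R in eb *.
have ha : 1 <= a by rewrite ler1n expn_gt0.
have hb : 1 <= b by rewrite ler1n expn_gt0.
have hl : lamm R m = 2 * a * (4 * b + 1).
  by rewrite /lamm natrM -natr1 !expnS !natrM -/a -/b; ring.
have y0 : 0 <= e * (l * b).
  by rewrite mulr_ge0 ?mulr_ge0 ?(ltW e0) //; lra.
rewrite -[X in _ <= X]ger0_norm // -sqrtr_sqr ler_sqrt ?sqr_ge0 // hl.
have h1 : 2 * a * (4 * b + 1) <= 10 * a * b by nra.
have h2 : 10 * a * b <= e ^+ 2 * a * (a * b) / 4.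
  have : 40 * (a * b) <= e ^+ 2 * a * (a * b) by rewrite ler_wpM2r ?mulr_ge0 //; lra.
  lra.
have h3 : e ^+ 2 * a * (a * b) / 4 <= (e * (l * b)) ^+ 2.
  have hq : e ^+ 2 * a * (a * b) = e ^+ 2 * (b * b) by rewrite eb; ring.
  rewrite hq.
  have hl2 : 4^-1 <= l ^+ 2 by nra.
  have : e ^+ 2 * (b * b) * 4^-1 <= e ^+ 2 * (b * b) * l ^+ 2.
    by rewrite ler_wpM2l // mulr_ge0 ?sqr_ge0 // mulr_ge0; lra.
  move=> h; apply: le_trans h _; rewrite le_eqVlt; apply/orP; left; apply/eqP; ring.
lra.
Qed.

Theorem theorem2p4 (dT : measure_display) (T : measurableType dT)
  (R : realType) (P : probability T R) (d : nat) (X : nat -> T -> dir d) :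
  (0 < d)%N ->
  is_ERW P (p_crit (R:=R) d) X ->
  {ae P, forall t, forall j : 'I_d,
     (fun n : nat => (Num.sqrt n%:R * ln n%:R)^-1 * erw_G X n t j) @ \oo --> (0 : R)}.
Proof.
move=> hd hE.
pose x0 : dir d := (@Ordinal d 0 hd, true).
have hX : forall n y, measurable [set t | X n t = y] := proj1 hE.
apply: filter_forall => j.
exists (lim_sup_set (Fm dT T R d X j)); split.
- apply: bigcap_measurable => [|k _]; first by exists 0%N.
  by apply: bigcup_measurable => i _; exact: (@Fm_meas _ _ _ P _ _ hE).
- apply: lim_sup_set_cvg0 => [k|]; first exact: (@Fm_meas _ _ _ P _ _ hE).
  exact: (@sum_PF _ _ _ P _ _ hd hE x0 j).
move=> t /=; apply: contra_notP => nL.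
have [m0 hm0] : exists m0, forall m, (m0 <= m)%N -> ~ Fm dT T R d X j m t.
  have : ~ (forall n, exists2 m, (n <= m)%N & Fm dT T R d X j m t).
    move=> h; apply: nL => n _; have [m hm hF] := h n; by exists m.
  move/existsNP => [m0 h0]; exists m0 => m hm hF; apply: h0; by exists m.
apply/cvgr0Pnorm_le => e e0.
have [K hK] : exists K : nat, 40 / e ^+ 2 < K%:R.
  exists (Num.bound (40 / e ^+ 2)); apply: archi_boundP.
  by rewrite divr_ge0 ?sqr_ge0.
exists (Nm (maxn m0 K)) => // n /= hn.
have [m [hm /andP [h1 h2]]] := @cover _ _ hn.
have hv : vmax R d j (pth dT T d X (Nm m.+1) t) <= lamm R m.
  rewrite leNgt; apply/negP => h; apply: (hm0 m _ h).
  exact: leq_trans (leq_maxl _ _) hm.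
have n2 : (2 <= n)%N := leq_trans (Nm_ge2 m) h1.
have hG := @DB _ _ _ _ X x0 j t (Nm m.+1) n (lamm R m) (introT andP (conj (leq_trans (isT : (0 < 2)%N) n2) (ltnW h2))) hv.
have he : 40 <= e ^+ 2 * (2 ^ m)%:R.
  have e2 : 0 < e ^+ 2 by rewrite exprn_gt0.
  rewrite mulrC -ler_pdivrMr //; apply: (le_trans (ltW hK)).
  rewrite ler_nat; apply: leq_trans (ltnW (ltn_expl m (isT : (1 < 2)%N))).
  exact: leq_trans (leq_maxr _ _) hm.
have hNL := @NL R m e e0 he.
have sn : 0 < Num.sqrt n%:R :> R by rewrite sqrtr_gt0 ltr0n (leq_trans _ n2).
have lnN : 0 < ln (Nm m)%:R :> R by rewrite ln_gt0 // ltr1n Nm_ge2.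
have lnn : ln (Nm m)%:R <= ln n%:R :> R.
  by rewrite ler_ln ?posrE ?ltr0n ?(leq_trans _ n2) ?ler_nat // (leq_trans _ (Nm_ge2 m)).
have A0 : 0 < Num.sqrt n%:R * ln n%:R :> R by rewrite mulr_gt0 // (lt_le_trans lnN).
rewrite normrM normfV (gtr0_norm A0) mulrC ler_pdivrMr //.
apply: le_trans hG _; rewrite sqrtrM ?ler0n // mulrCA ler_wpM2l ?sqrtr_ge0 //.
apply: le_trans hNL _; rewrite ler_pM2l //.
Qed.
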